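(* Let $H$ and $G$ be as in the construction described in the context. If $H$ is torsion free, then so is $G$; if $H$ is locally indicable, then so is $G$.
   Context: A group is locally indicable if every nontrivial finitely generated subgroup admits a surjective homomorphism onto $\mathbb{Z}$. Construction: $H$ is a group generated by a countable set $\{a^{(1)},a^{(2)},\ldots\}$. For groups $A,B$, the wreath product $A\,\mathrm{Wr}\,B$ is the semidirect product $A^B\rtimes B$, where $A^B$ is the group of all functions $B\to A$ with pointwise multiplication and $B$ acts by $(bf)(x)=f(xb)$. Let $Z=\langle z\rangle$ be infinite cyclic and let $b^{(i)}\in H^Z$ be given by $b^{(i)}(z^k)=a^{(i)}$ if $k>0$ and $b^{(i)}(z^k)=1$ otherwise. Let $K=\langle z,b^{(i)}\ (i\in\mathbb{N})\rangle\le H\,\mathrm{Wr}\,Z$. Let $\langle s\rangle$ be infinite cyclic and let $c\in K^{\langle s\rangle}$ be given by $c(s)=z$, $c(s^{2^i})=b^{(i)}$ for $i>0$, and $c(s^k)=1$ otherwise. Let $G=\langle c,s\rangle\le K\,\mathrm{Wr}\,\langle s\rangle$. *)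

(* Defs.v *)
From Stdlib Require Import Bool ZArith List Lia FunctionalExtensionality ProofIrrelevance.
Open Scope Z_scope.

Record group := Group {
  carrier :> Type;
  mul : carrier -> carrier -> carrier;
  one : carrier;
  inv : carrier -> carrier;
  mulA : forall x y z, mul x (mul y z) = mul (mul x y) z;
  mul1g : forall x, mul one x = x;
  mulg1 : forall x, mul x one = x;
  mulVg : forall x, mul (inv x) x = one;
  mulgV : forall x, mul x (inv x) = one }.
Arguments mul {g}.
Arguments one {g}.
Arguments inv {g}.

Fixpoint gpow (G : group) (x : G) (n : nat) : G :=
  match n with O => one | S n => mul x (gpow G x n) end.

Inductive gen (G : group) (S : G -> Prop) : G -> Prop :=
  | gen_in : forall x, S x -> gen G S x
  | gen_one : gen G S one
  | gen_mul : forall x y, gen G S x -> gen G S y -> gen G S (mul x y)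
  | gen_inv : forall x, gen G S x -> gen G S (inv x).
Arguments gen {G}.

Lemma sig_eq_pi (T : Type) (P : T -> Prop) (x y : {t | P t}) :
  proj1_sig x = proj1_sig y -> x = y.
Proof. destruct x as [x px], y as [y py]; simpl; intros ->; f_equal; apply proof_irrelevance. Qed.

Definition gen_group (G : group) (S : G -> Prop) : group.
Proof.
  refine (@Group {x : G | gen S x}
    (fun x y => exist _ (mul (proj1_sig x) (proj1_sig y)) (gen_mul _ _ _ _ (proj2_sig x) (proj2_sig y)))
    (exist _ one (gen_one _ _))
    (fun x => exist _ (inv (proj1_sig x)) (gen_inv _ _ _ (proj2_sig x))) _ _ _ _ _);
  intros; apply sig_eq_pi; simpl;
  [apply mulA | apply mul1g | apply mulg1 | apply mulVg | apply mulgV].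
Defined.

(* Wreath product A Wr Z = A^Z ⋊ Z, with Z = <z> written additively (z^k = k).
   An element (f, m) stands for f * z^m; z acts by (z^m . g)(x) = g(x + m),
   i.e. (b g)(x) = g(x b). Hence (f,m)(g,n) = (x |-> f x * g (x+m), m+n). *)
Definition wr_mul (A : group) (p q : (Z -> A) * Z) : (Z -> A) * Z :=
  (fun x => mul (fst p x) (fst q (x + snd p)), snd p + snd q).
Definition wr_one (A : group) : (Z -> A) * Z := (fun _ => one, 0).
Definition wr_inv (A : group) (p : (Z -> A) * Z) : (Z -> A) * Z :=
  (fun x => inv (fst p (x - snd p)), - snd p).

Definition wrZ (A : group) : group.
Proof.
  refine (@Group ((Z -> A) * Z)%type (wr_mul A) (wr_one A) (wr_inv A) _ _ _ _ _);
  unfold wr_mul, wr_one, wr_inv.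
  - intros [f m] [g n] [h p]; simpl; f_equal; [|lia].
    apply functional_extensionality; intro x.
    rewrite mulA, Z.add_assoc; reflexivity.
  - intros [f m]; simpl; f_equal; apply functional_extensionality; intro x.
    rewrite Z.add_0_r; apply mul1g.
  - intros [f m]; simpl; f_equal; [|lia]; apply functional_extensionality; intro x.
    apply mulg1.
  - intros [f m]; simpl; f_equal; [|lia]; apply functional_extensionality; intro x.
    replace (x + - m) with (x - m) by lia; apply mulVg.
  - intros [f m]; simpl; f_equal; [|lia]; apply functional_extensionality; intro x.
    replace (x + m - m) with x by lia; apply mulgV.
Defined.

Section Construction.
Variables (H : group) (a : nat -> H).
(* a j stands for the generator a^(j+1) of the paper (indexing from 0). *)

Definition zel : wrZ H := (fun _ => one, 1).
(* b j = b^(j+1): b(z^k) = a^(j+1) if k > 0, 1 otherwise *)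
Definition bel (j : nat) : wrZ H := (fun k => if 0 <? k then a j else one, 0).

Definition K_gens (x : wrZ H) : Prop := x = zel \/ exists j, x = bel j.
Definition K : group := gen_group (wrZ H) K_gens.

Definition zK : K := exist _ zel (gen_in _ _ _ (or_introl eq_refl)).
Definition bK (j : nat) : K := exist _ (bel j) (gen_in _ _ _ (or_intror (ex_intro _ j eq_refl))).

(* c : <s> -> K with c(s) = z, c(s^(2^i)) = b^(i) for i > 0, c(s^k) = 1 otherwise.
   For k = 2^(j+1) we have Z.log2 k = j+1 and c(s^k) = b^(j+1) = bK j. *)
Definition cfun (k : Z) : K :=
  if k =? 1 then zK
  else if ((1 <? k) && (k =? 2 ^ Z.log2 k))%bool then bK (Z.to_nat (Z.log2 k - 1))
  else one.

Definition cel : wrZ K := (cfun, 0).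
Definition sel : wrZ K := (fun _ => one, 1).

Definition G_gens (x : wrZ K) : Prop := x = cel \/ x = sel.
Definition Ggrp : group := gen_group (wrZ K) G_gens.
End Construction.

Definition torsion_free (G : group) : Prop :=
  forall (x : G) (n : nat), x <> one -> (0 < n)%nat -> gpow G x n <> one.

Definition locally_indicable (G : group) : Prop :=
  forall S : list G,
    (exists x, gen (fun y => In y S) x /\ x <> one) ->
    exists phi : gen_group G (fun y => In y S) -> Z,
      (forall x y, phi (mul x y) = phi x + phi y) /\
      (forall n : Z, exists x, phi x = n).

(* Main.v *)
Require Import Defs.
From Stdlib Require Import ZArith List.
From Stdlib Require Import Classical FunctionalExtensionality Lia.
Open Scope Z_scope.

Lemma idem_one (G : group) (e : G) : mul e e = e -> e = one.
Proof.
  intro E.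
  transitivity (mul (inv e) (mul e e)).
  - rewrite mulA, mulVg, mul1g. reflexivity.
  - rewrite E. apply mulVg.
Qed.

Lemma inv_uniq (G : group) (x y : G) : mul y x = one -> y = inv x.
Proof.
  intro E. rewrite <- (mulg1 G y), <- (mulgV G x), mulA, E, mul1g. reflexivity.
Qed.

Lemma LI_transfer (G A : group) (f : G -> A) (S : list G) :
  locally_indicable A ->
  (forall x y, gen (fun y => In y S) x -> gen (fun y => In y S) y ->
     f (mul x y) = mul (f x) (f y)) ->
  (exists x, gen (fun y => In y S) x /\ f x <> one) ->
  exists phi : gen_group G (fun y => In y S) -> Z,
      (forall x y, phi (mul x y) = phi x + phi y) /\ (forall n : Z, exists x, phi x = n).
Proof.
  intros HA Hm [x0 [Hx0 Hne]].
  set (T := map f S).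
  assert (Hone : f one = one).
  { apply idem_one. rewrite <- Hm by constructor 2. rewrite mul1g. reflexivity. }
  assert (C1 : forall x, gen (fun y => In y S) x -> gen (fun y => In y T) (f x)).
  { intros x Hx; induction Hx.
    - apply gen_in. apply in_map. assumption.
    - rewrite Hone. apply gen_one.
    - rewrite Hm by assumption. apply gen_mul; assumption.
    - assert (f (inv x) = inv (f x)) as ->.
      { apply inv_uniq. rewrite <- Hm. rewrite mulVg. exact Hone.
        apply gen_inv; assumption. assumption. }
      apply gen_inv; assumption. }
  assert (C2 : forall y, gen (fun y => In y T) y -> exists x, gen (fun y => In y S) x /\ f x = y).
  { intros y Hy; induction Hy.
    - apply in_map_iff in H. destruct H as [x' [E I]]. exists x'. split; [apply gen_in; auto|auto].
    - exists one. split; [apply gen_one|exact Hone].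
    - destruct IHHy1 as [x1 [G1 E1]], IHHy2 as [x2 [G2 E2]].
      exists (mul x1 x2). split; [apply gen_mul; auto|]. rewrite Hm by auto. subst; reflexivity.
    - destruct IHHy as [x1 [G1 E1]]. exists (inv x1). split; [apply gen_inv; auto|].
      subst. apply inv_uniq. rewrite <- Hm. rewrite mulVg. exact Hone.
      apply gen_inv; assumption. assumption. }
  destruct (HA T) as [phiA [Hh Hs]].
  { exists (f x0). split; auto. }
  exists (fun x : gen_group G (fun y => In y S) =>
            phiA (exist _ (f (proj1_sig x)) (C1 _ (proj2_sig x)))).
  split.
  - intros x y. rewrite <- Hh. f_equal. apply sig_eq_pi. simpl.
    apply Hm; [exact (proj2_sig x)|exact (proj2_sig y)].
  - intro n. destruct (Hs n) as [[y Hy] E].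
    destruct (C2 y Hy) as [x [Gx Ex]].
    exists (exist _ x Gx). rewrite <- E. f_equal. apply sig_eq_pi. simpl. exact Ex.
Qed.

Definition Zgrp : group.
Proof.
  refine (@Group Z Z.add 0 Z.opp _ _ _ _ _); intros; lia.
Defined.

Lemma Z_sub (P : Z -> Prop) : P 0 -> (forall x y, P x -> P y -> P (x+y)) ->
  (forall x, P x -> P (-x)) -> forall x0, P x0 -> x0 <> 0 ->
  exists d, 0 < d /\ P d /\ forall x, P x -> (d | x).
Proof.
  intros P0 PA PN x0 Px0 Hx0.
  assert (Mul : forall d, P d -> forall k, P (k*d)).
  { intros d Pd.
    assert (Hn : forall k, 0 <= k -> P (k*d)).
    { apply natlike_ind. simpl. exact P0.
      intros x _ IH. replace (Z.succ x * d) with (x*d + d) by ring. auto. }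
    intro k. destruct (Z_le_gt_dec 0 k). auto.
    replace (k*d) with (- ((-k)*d)) by ring. apply PN, Hn. lia. }
  assert (Hp : exists p, 0 < p /\ P p).
  { destruct (Z_lt_le_dec 0 x0). eauto. exists (-x0). split. lia. auto. }
  destruct Hp as [p [Hp Pp]].
  assert (Hmin : exists d, 0 < d /\ P d /\ forall q, 0 < q -> P q -> d <= q).
  { destruct (classic (exists d, 0 < d /\ P d /\ forall q, 0 < q -> P q -> d <= q))
      as [Hd|Hn]; [exact Hd|exfalso].
    assert (Hind : forall n : nat, forall q, 0 < q -> P q -> (Z.to_nat q < n)%nat -> False).
    { induction n; intros q Hq Pq Hlt. lia.
      destruct (classic (exists q', 0 < q' /\ P q' /\ q' < q)) as [[q' [H1 [H2 H3]]]|Hq'].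
      - apply (IHn q'); auto. lia.
      - apply Hn. exists q. split; [auto|split; [auto|]].
        intros q'' H1 H2. destruct (Z_le_gt_dec q q''); auto.
        exfalso. apply Hq'. exists q''. split; [auto|split; [auto|lia]]. }
    apply (Hind (S (Z.to_nat p)) p); auto. }
  destruct Hmin as [d [Hd [Pd Hmd]]].
  exists d. split; [auto|split; [auto|]].
  intros x Px.
  apply Z.mod_divide. lia.
  pose proof (Z.div_mod x d ltac:(lia)) as E.
  pose proof (Z.mod_pos_bound x d Hd) as B.
  assert (Pr : P (x mod d)).
  { replace (x mod d) with (x + (-(x/d))*d) by lia. apply PA; auto. }
  destruct (Z.eq_dec (x mod d) 0); auto.
  exfalso. assert (d <= x mod d) by (apply Hmd; auto; lia). lia.
Qed.

Lemma LI_Z : locally_indicable Zgrp.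
Proof.
  intros S [x0 [Hx0 Hne]].
  destruct (Z_sub (fun x => @gen Zgrp (fun y => In y S) x)) with (x0 := x0)
    as [d [Hd [Pd Hdiv]]].
  - exact (gen_one _ _).
  - intros x y Px Py. exact (gen_mul _ _ _ _ Px Py).
  - intros x Px. exact (gen_inv _ _ _ Px).
  - exact Hx0.
  - exact Hne.
  - exists (fun x : gen_group Zgrp (fun y => In y S) => proj1_sig x / d).
    split.
    + intros [x Hx] [y Hy]. simpl.
      destruct (Hdiv x Hx) as [kx ->]. destruct (Hdiv y Hy) as [ky ->].
      replace (kx*d + ky*d) with ((kx+ky)*d) by ring.
      rewrite !Z.div_mul by lia. reflexivity.
    + intro n.
      assert (Mul : forall k, @gen Zgrp (fun y => In y S) (k*d)).
      { assert (Hn : forall k, 0 <= k -> @gen Zgrp (fun y => In y S) (k*d)).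
        { apply natlike_ind. exact (gen_one _ _).
          intros x _ IH. replace (Z.succ x * d) with (x*d + d) by ring.
          exact (gen_mul _ _ _ _ IH Pd). }
        intro k. destruct (Z_le_gt_dec 0 k). auto.
        replace (k*d) with (- ((-k)*d)) by ring. apply (gen_inv Zgrp), Hn. lia. }
      exists (exist _ (n*d) (Mul n)). simpl. apply Z.div_mul. lia.
Qed.

Lemma LI_sub (A : group) (P : A -> Prop) :
  locally_indicable A -> locally_indicable (gen_group A P).
Proof.
  intros HA S [x0 [Hx0 Hne]].
  apply (LI_transfer (gen_group A P) A (fun x : gen_group A P => proj1_sig x) S HA).
  - intros; reflexivity.
  - exists x0. split; auto. intro E. apply Hne. apply sig_eq_pi. exact E.
Qed.

Lemma nontriv_wr (A : group) (x : wrZ A) :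
  x <> one -> snd x <> 0 \/ exists k, fst x k <> one.
Proof.
  intro Hne. destruct (classic (snd x <> 0)) as [|H0]; [left; auto|right].
  apply NNPP. intro Hn. apply Hne.
  destruct x as [f m]. simpl in *. change (@one (wrZ A)) with (fun _ : Z => @one A, 0).
  assert (m = 0) as -> by lia.
  assert (f = fun _ => one) as ->.
  { apply functional_extensionality. intro k.
    apply NNPP. intro Hk. apply Hn. exists k. exact Hk. }
  reflexivity.
Qed.

Lemma LI_wr (A : group) : locally_indicable A -> locally_indicable (wrZ A).
Proof.
  intros HA S [x0 [Hx0 Hne]].
  destruct (classic (exists s, In s S /\ snd s <> 0)) as [[s [Hs Hsn]] | Hall].
  - apply (LI_transfer (wrZ A) Zgrp (fun x => snd x) S LI_Z).
    + intros; reflexivity.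
    + exists s. split; [apply gen_in; auto|exact Hsn].
  - assert (Hsnd : forall x, gen (fun y => In y S) x -> snd x = 0).
    { intros x Hx; induction Hx.
      - apply NNPP. intro. apply Hall. eauto.
      - reflexivity.
      - change (snd x + snd y = 0). lia.
      - change (- snd x = 0). lia. }
    destruct (nontriv_wr A x0 Hne) as [Hs|[k Hk]].
    + exfalso. apply Hs. auto.
    + apply (LI_transfer (wrZ A) A (fun x => fst x k) S HA).
      * intros x y Hx Hy. change (mul (fst x k) (fst y (k + snd x)) = mul (fst x k) (fst y k)).
        rewrite (Hsnd x Hx), Z.add_0_r. reflexivity.
      * exists x0. split; auto.
Qed.

Lemma gpow_sub (A : group) (P : A -> Prop) (x : gen_group A P) n :
  proj1_sig (gpow _ x n) = gpow A (proj1_sig x) n.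
Proof. induction n; simpl; auto. rewrite <- IHn. reflexivity. Qed.

Lemma TF_sub (A : group) (P : A -> Prop) :
  torsion_free A -> torsion_free (gen_group A P).
Proof.
  intros HA x n Hx Hn E. apply (HA (proj1_sig x) n).
  - intro E'. apply Hx. apply sig_eq_pi. exact E'.
  - exact Hn.
  - rewrite <- gpow_sub, E. reflexivity.
Qed.

Lemma gpow_wr_snd (A : group) (x : wrZ A) n : snd (gpow _ x n) = Z.of_nat n * snd x.
Proof. induction n. reflexivity. change (snd x + snd (gpow _ x n) = Z.of_nat (S n) * snd x).
  rewrite IHn. lia. Qed.

Lemma gpow_wr_fst (A : group) (x : wrZ A) n k : snd x = 0 ->
  fst (gpow _ x n) k = gpow A (fst x k) n.
Proof. intro H0. induction n. reflexivity.
  change (mul (fst x k) (fst (gpow _ x n) (k + snd x)) = mul (fst x k) (gpow A (fst x k) n)).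
  rewrite H0, Z.add_0_r, IHn. reflexivity. Qed.

Lemma TF_wr (A : group) : torsion_free A -> torsion_free (wrZ A).
Proof.
  intros HA x n Hx Hn E.
  destruct (nontriv_wr A x Hx) as [Hs|[k Hk]].
  - apply (f_equal snd) in E. rewrite gpow_wr_snd in E. change (Z.of_nat n * snd x = 0) in E. nia.
  - destruct (Z.eq_dec (snd x) 0) as [H0|H0].
    + apply (HA (fst x k) n Hk Hn). rewrite <- gpow_wr_fst by exact H0. rewrite E. reflexivity.
    + apply (f_equal snd) in E. rewrite gpow_wr_snd in E. change (Z.of_nat n * snd x = 0) in E. nia.
Qed.

Theorem corollary3 (H : group) (a : nat -> H)
  (Hgen : forall h : H, gen (fun x => exists i, x = a i) h) :
  (torsion_free H -> torsion_free (Ggrp H a)) /\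
  (locally_indicable H -> locally_indicable (Ggrp H a)).
Proof.
  split; intro HH; unfold Ggrp, K.
  - apply TF_sub, TF_wr, TF_sub, TF_wr, HH.
  - apply LI_sub, LI_wr, LI_sub, LI_wr, HH.
Qed.
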